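(* Let $P=\operatorname{conv}(W(\Lambda))$ be a full-dimensional non-degenerate $W$-symmetric polytope, $K\subseteq S$, and $\mathbb{F}$ a field. Write the Stanley–Reisner ring of $P/W_K=P\cap C_K$ as $\mathcal{SR}(P/W_K)=\mathbb{F}[X_{F,e},Y_k: F\in\mathcal{F}_K, k\in K]/I_K$, where $X_{F,e}$ corresponds to the facet $F\cap C_K$ and $Y_k$ to the facet $H_k\cap P$. Then the ideal $I_K$ is generated by the monomials of the following two types: (i) $X_{F_1,e}X_{F_2,e}\cdots X_{F_p,e}$ with $F_1\cap F_2\cap\cdots\cap F_p=\emptyset$; (ii) $X_{F,e}Y_k$ with $F\cap H_k=\emptyset$.
   Context: $V$ is a real Euclidean space of dimension $n$, $R$ a reduced root system spanning $V$ with simple system $S=\{\alpha_1,\dots,\alpha_n\}$ identified with $\{1,\dots,n\}$; $H_k$ is the hyperplane orthogonal to $\alpha_k$; $W$ is the Weyl group, $W_K$ the subgroup generated by the reflections in $\alpha_k$, $k\in K$. $C_K=\{x:\langle x,\alpha_k\rangle\ge0\ \forall k\in K\}$, $\Lambda\subset C_S$ finite, non-degenerate means no vertex of $P$ lies on the boundary of $C_S$. $\mathcal{F}_K$ is the set of facets of $P$ whose barycenters lie in $C_K$; the facets of $P\cap C_K$ are exactly the $F\cap C_K$ ($F\in\mathcal{F}_K$) and the $H_k\cap P$ ($k\in K$). The Stanley–Reisner ring of a polytope $Q$ over $\mathbb{F}$ is $\mathbb{F}[X_G: G \text{ facet of } Q]/I$ where $I$ is generated by all monomials $X_{G_1}\cdots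 X_{G_p}$ with $G_1\cap\cdots\cap G_p=\emptyset$; thus $I_K$ is generated by the monomials $X_{F_1,e}\cdots X_{F_p,e}Y_{k_1}\cdots Y_{k_q}$ whose corresponding facets of $P\cap C_K$ have empty intersection. *)

(* Defs.v *)
From mathcomp Require Import all_boot all_order all_algebra.
From mathcomp Require Import mpoly.
From mathcomp Require Import reals.
Set Implicit Arguments. Unset Strict Implicit. Unset Printing Implicit Defensive.
Import GRing.Theory Num.Theory.
Local Open Scope ring_scope.

Section Geometry.
Variables (R : realType) (n : nat).
Notation V := 'rV[R]_n.

Definition dot (u v : V) : R := (u *m v^T) 0 0.

Definition refl (a x : V) : V := x - ((2 * dot x a) / dot a a) *: a.

Definition reduced_root_system (Rt : seq V) : Prop :=
  [/\ uniq Rt, 0 \notin Rt &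
      (forall v : V, exists c : 'I_(size Rt) -> R,
          v = \sum_(i < size Rt) c i *: Rt`_i)] /\
  [/\ (forall a b, a \in Rt -> b \in Rt -> refl a b \in Rt),
      (forall u w, u \in Rt -> w \in Rt -> (2 * dot w u) / dot u u \is a Num.int)
    & (forall a (c : R), a \in Rt -> c *: a \in Rt -> c = 1 \/ c = -1)].

Definition simple_system (Rt : seq V) (alpha : 'I_n -> V) : Prop :=
  [/\ (forall k, alpha k \in Rt),
      (forall c : 'I_n -> R, \sum_k c k *: alpha k = 0 -> forall k, c k = 0)
    & (forall b, b \in Rt -> exists c : 'I_n -> R,
          b = \sum_k c k *: alpha k /\
          ((forall k, c k \is a Num.nat) \/ (forall k, - c k \is a Num.nat)))].

(* the W-orbit W(Lambda): images of points of Lambda under finite products of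
   reflections s_a, a in Rt (these generate the Weyl group W) *)
Definition Worbit (Rt : seq V) (Lam : seq V) (x : V) : Prop :=
  exists (l : seq V) (lam : V),
    [/\ all (fun a => a \in Rt) l, lam \in Lam & x = foldr refl lam l].

Definition conv (A : V -> Prop) (x : V) : Prop :=
  exists (m : nat) (p : 'I_m -> V) (w : 'I_m -> R),
    [/\ (forall i, A (p i)), (forall i, 0 <= w i), \sum_i w i = 1
      & x = \sum_i w i *: p i].

Definition cone (alpha : 'I_n -> V) (K : {set 'I_n}) (x : V) : Prop :=
  forall k, k \in K -> 0 <= dot x (alpha k).

Definition wall (alpha : 'I_n -> V) (k : 'I_n) (x : V) : Prop :=
  dot x (alpha k) = 0.

Definition aff_dim_ge (A : V -> Prop) (d : nat) : Prop :=
  exists (x0 : V) (p : 'I_d -> V),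
    [/\ A x0, (forall i, A (p i))
      & forall c : 'I_d -> R, \sum_i c i *: (p i - x0) = 0 -> forall i, c i = 0].

Definition full_dimensional (P : V -> Prop) : Prop := aff_dim_ge P n.

Definition face (P F : V -> Prop) : Prop :=
  exists (a : V) (b : R),
    [/\ a != 0, (forall x, P x -> dot a x <= b)
      & forall x, F x <-> (P x /\ dot a x = b)].

Definition facet (P F : V -> Prop) : Prop := face P F /\ aff_dim_ge F n.-1.

Definition vertex (P : V -> Prop) (v : V) : Prop := face P (fun x => x = v).

Definition nondeg_polytope (alpha : 'I_n -> V) (P : V -> Prop) : Prop :=
  forall v, vertex P v ->
    ~ (cone alpha setT v /\ exists k, dot v (alpha k) = 0).

Definition barycenter (P F : V -> Prop) (b : V) : Prop :=
  exists s : seq V,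
    [/\ uniq s, (forall x, x \in s <-> (vertex P x /\ F x))
      & b = (size s)%:R^-1 *: \sum_(x <- s) x].

Definition facets_K (alpha : 'I_n -> V) (P : V -> Prop) (K : {set 'I_n})
  (F : V -> Prop) : Prop :=
  facet P F /\ exists b, barycenter P F b /\ cone alpha K b.

End Geometry.

Definition gen_ideal (T : comRingType) (G : T -> Prop) (p : T) : Prop :=
  exists s : seq (T * T), (forall c, c \in s -> G c.2) /\
    p = \sum_(c <- s) c.1 * c.2.

(* Main.v *)
Require Import Defs.
From mathcomp Require Import all_boot all_order all_algebra.
From mathcomp Require Import mpoly.
From mathcomp Require Import reals.
From mathcomp Require Import boolp.
From mathcomp Require Import ring lra.
Import Order.TTheory GRing.Theory Num.Theory.
Local Open Scope ring_scope.
Set Implicit Arguments. Unset Strict Implicit. Unset Printing Implicit Defensive.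

Section Lin.
Variables (R : realType) (n : nat).
Notation V := 'rV[R]_n.
Implicit Types (u v x y a : V).

Lemma dotE u v : dot u v = \sum_j u 0 j * v 0 j.
Proof. by rewrite /dot !mxE; apply: eq_bigr => j _; rewrite mxE. Qed.

Lemma dotC u v : dot u v = dot v u.
Proof. by rewrite !dotE; apply: eq_bigr => j _; rewrite mulrC. Qed.

Lemma dotDl u v x : dot (u + v) x = dot u x + dot v x.
Proof. by rewrite !dotE -big_split; apply: eq_bigr => j _; rewrite mxE mulrDl. Qed.

Lemma dotZl c u x : dot (c *: u) x = c * dot u x.
Proof. by rewrite !dotE mulr_sumr; apply: eq_bigr => j _; rewrite mxE mulrA. Qed.

Lemma dotNl u x : dot (- u) x = - dot u x.
Proof. by rewrite -scaleN1r dotZl mulN1r. Qed.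

Lemma dotBl u v x : dot (u - v) x = dot u x - dot v x.
Proof. by rewrite dotDl dotNl. Qed.

Lemma dot0l x : dot 0 x = 0.
Proof. by rewrite dotE big1 // => j _; rewrite mxE mul0r. Qed.

Lemma dotDr u v x : dot x (u + v) = dot x u + dot x v.
Proof. by rewrite dotC dotDl !(dotC x). Qed.
Lemma dotZr c u x : dot x (c *: u) = c * dot x u.
Proof. by rewrite dotC dotZl dotC. Qed.
Lemma dotNr u x : dot x (- u) = - dot x u.
Proof. by rewrite dotC dotNl dotC. Qed.
Lemma dotBr u v x : dot x (u - v) = dot x u - dot x v.
Proof. by rewrite dotDr dotNr. Qed.
Lemma dot0r x : dot x 0 = 0.
Proof. by rewrite dotC dot0l. Qed.

Lemma dot_suml (I : Type) (r : seq I) (P : pred I) (F : I -> V) x :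
  dot (\sum_(i <- r | P i) F i) x = \sum_(i <- r | P i) dot (F i) x.
Proof.
elim/big_rec2: _ => [|i y1 y2 _ <-]; first by rewrite dot0l.
by rewrite dotDl.
Qed.

Lemma dot_sumr (I : Type) (r : seq I) (P : pred I) (F : I -> V) x :
  dot x (\sum_(i <- r | P i) F i) = \sum_(i <- r | P i) dot x (F i).
Proof. by rewrite dotC dot_suml; apply: eq_bigr => i _; rewrite dotC. Qed.

Lemma dot_ge0 u : 0 <= dot u u.
Proof. by rewrite dotE sumr_ge0 // => j _; rewrite -expr2 sqr_ge0. Qed.

Lemma dot_eq0 u : (dot u u == 0) = (u == 0).
Proof.
apply/idP/idP; last by move/eqP->; rewrite dot0l.
rewrite dotE psumr_eq0 => [|j _]; last by rewrite -expr2 sqr_ge0.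
move/allP => H; apply/eqP/rowP => j; rewrite mxE.
have := H j (mem_index_enum j); rewrite implyTb mulf_eq0 orbb.
by move/eqP.
Qed.

Lemma dot_gt0 u : u != 0 -> 0 < dot u u.
Proof. by move=> h; rewrite lt_def dot_ge0 dot_eq0 h. Qed.


Lemma reflD a x y : refl a (x + y) = refl a x + refl a y.
Proof.
rewrite /refl dotDl mulrDr mulrDl scalerDl.
by rewrite opprD addrACA.
Qed.

Lemma reflZ a c x : refl a (c *: x) = c *: refl a x.
Proof.
by rewrite /refl dotZl scalerBr scalerA; congr (_ - _ *: _); ring.
Qed.

Lemma refl0 a : refl a 0 = 0.
Proof. by rewrite /refl dot0l mulr0 mul0r scale0r subr0. Qed.

Lemma reflN a x : refl a (- x) = - refl a x.
Proof. by rewrite -scaleN1r reflZ scaleN1r. Qed.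

Lemma reflB a x y : refl a (x - y) = refl a x - refl a y.
Proof. by rewrite reflD reflN. Qed.

Lemma refl_sum a (I : Type) (r : seq I) (P : pred I) (F : I -> V) :
  refl a (\sum_(i <- r | P i) F i) = \sum_(i <- r | P i) refl a (F i).
Proof.
elim/big_rec2: _ => [|i y1 y2 _ <-]; first by rewrite refl0.
by rewrite reflD.
Qed.

Lemma dot_refl_a a x : a != 0 -> dot (refl a x) a = - dot x a.
Proof.
move=> a0; have d0 : dot a a != 0 by rewrite dot_eq0.
rewrite /refl dotBl dotZl -mulrA mulVf // mulr1; ring.
Qed.

Lemma refl_a a : a != 0 -> refl a a = - a.
Proof.
move=> a0; have d0 : dot a a != 0 by rewrite dot_eq0.
rewrite /refl -mulrA mulfV // mulr1.
by rewrite scaler_nat mulr2n opprD addrA subrr add0r.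
Qed.

Lemma reflK a x : a != 0 -> refl a (refl a x) = x.
Proof.
move=> a0; rewrite [refl a x]/refl reflB reflZ refl_a // scalerN opprK.
by rewrite {1}/refl subrK.
Qed.

Lemma dot_reflC a x y : dot (refl a x) y = dot x (refl a y).
Proof.
rewrite /refl dotBl dotBr dotZl dotZr; congr (_ - _).
rewrite (dotC a y); ring.
Qed.

Lemma dot_refl a x y : a != 0 -> dot (refl a x) (refl a y) = dot x y.
Proof. by move=> a0; rewrite dot_reflC reflK. Qed.

Lemma refl_fix a x : a != 0 -> (refl a x == x) = (dot x a == 0).
Proof.
move=> a0; have d0 : dot a a != 0 by rewrite dot_eq0.
rewrite /refl -subr_eq0 addrAC subrr add0r oppr_eq0 scaler_eq0 (negbTE a0) orbF.
by rewrite mulf_eq0 invr_eq0 (negbTE d0) orbF mulf_eq0 pnatr_eq0 /=.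
Qed.

Definition wmap (l : seq V) (x : V) := foldr (@refl R n) x l.
Definition nzs (l : seq V) := all (fun a => a != 0) l.

Lemma wmap_cons a l x : wmap (a :: l) x = refl a (wmap l x).
Proof. by []. Qed.

Lemma wmap_cat l1 l2 x : wmap (l1 ++ l2) x = wmap l1 (wmap l2 x).
Proof. by rewrite /wmap foldr_cat. Qed.

Lemma wmapD l x y : wmap l (x + y) = wmap l x + wmap l y.
Proof. by elim: l => //= a l ->; rewrite reflD. Qed.
Lemma wmapZ l c x : wmap l (c *: x) = c *: wmap l x.
Proof. by elim: l => //= a l ->; rewrite reflZ. Qed.
Lemma wmap0 l : wmap l 0 = 0.
Proof. by elim: l => //= a l ->; rewrite refl0. Qed.
Lemma wmapB l x y : wmap l (x - y) = wmap l x - wmap l y.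
Proof. by elim: l => //= a l ->; rewrite reflB. Qed.

Lemma wmap_sum l (I : Type) (r : seq I) (P : pred I) (F : I -> V) :
  wmap l (\sum_(i <- r | P i) F i) = \sum_(i <- r | P i) wmap l (F i).
Proof.
elim/big_rec2: _ => [|i y1 y2 _ <-]; first by rewrite wmap0.
by rewrite wmapD.
Qed.

Lemma nzs_rev l : nzs (rev l) = nzs l.
Proof. by rewrite /nzs all_rev. Qed.

Lemma wmapK l x : nzs l -> wmap (rev l) (wmap l x) = x.
Proof.
elim: l x => //= a l IH x /andP[a0 nl].
by rewrite rev_cons -cats1 wmap_cat /= reflK // IH.
Qed.

Lemma wmapKr l x : nzs l -> wmap l (wmap (rev l) x) = x.
Proof. by move=> nl; rewrite -{1}(revK l) wmapK // nzs_rev. Qed.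

Lemma dot_wmap l x y : nzs l -> dot (wmap l x) (wmap l y) = dot x y.
Proof.
elim: l => //= a l IH /andP[a0 nl].
by rewrite dot_refl // IH.
Qed.

Lemma dot_wmapC l x y : nzs l -> dot (wmap l x) y = dot x (wmap (rev l) y).
Proof.
by move=> nl; rewrite -{1}(wmapKr y nl) dot_wmap.
Qed.

End Lin.

Section Geo.
Variables (R : realType) (n : nat).
Notation V := 'rV[R]_n.
Variables (Rt : seq V) (alpha : 'I_n -> V) (Lam : seq V).
Hypothesis HR : reduced_root_system Rt.
Hypothesis HS : simple_system Rt alpha.
Hypothesis HL : forall lam, lam \in Lam -> cone alpha setT lam.
Notation P := (conv (Worbit Rt Lam)).
Notation Orb := (Worbit Rt Lam).
Implicit Types (u v x y a : V).

Lemma root_nz a : a \in Rt -> a != 0.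
Proof. by case: HR => -[_ H0 _] _ aR; apply: contraNneq H0 => <-. Qed.

Lemma rootsl_nz l : all (mem Rt) l -> nzs l.
Proof. by move=> /allP H; apply/allP => a /H; apply: root_nz. Qed.

Lemma wmap_root l a : all (mem Rt) l -> a \in Rt -> wmap l a \in Rt.
Proof.
case: HR => _ [Hr _ _].
elim: l => //= b l IH /andP[bR lR] aR.
by apply: Hr => //; apply: IH.
Qed.

Lemma alpha_root k : alpha k \in Rt.
Proof. by case: HS. Qed.

Lemma alpha_nz k : alpha k != 0.
Proof. exact/root_nz/alpha_root. Qed.

Lemma OrbE x : Orb x <-> exists l lam, [/\ all (mem Rt) l, lam \in Lam & x = wmap l lam].
Proof. by []. Qed.

Lemma Orb_wmap l x : all (mem Rt) l -> Orb x -> Orb (wmap l x).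
Proof.
move=> lR [l' [lam [l'R lamL ->]]].
exists (l ++ l'), lam; split => //; first by rewrite all_cat lR.
by rewrite -wmap_cat.
Qed.

Lemma Orb_refl a x : a \in Rt -> Orb x -> Orb (refl a x).
Proof. by move=> aR; apply: (@Orb_wmap [:: a]); rewrite /= aR. Qed.

Lemma P_wmap l x : all (mem Rt) l -> P x -> P (wmap l x).
Proof.
move=> lR [m [p [w [Hp Hw Hs ->]]]].
exists m, (fun i => wmap l (p i)), w; split => //.
  by move=> i; apply: Orb_wmap.
by rewrite wmap_sum; apply: eq_bigr => i _; rewrite wmapZ.
Qed.

Lemma P_refl a x : a \in Rt -> P x -> P (refl a x).
Proof. by move=> aR; apply: (@P_wmap [:: a]); rewrite /= aR. Qed.

Lemma Orb_P x : Orb x -> P x.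
Proof.
move=> Ox; exists 1%N, (fun _ => x), (fun _ => 1); split => //.
  by rewrite big_ord1.
by rewrite big_ord1 scale1r.
Qed.

Lemma split_lsh m1 m2 (i : 'I_m1) : split (lshift m2 i) = inl i.
Proof. by have := unsplitK (inl _ i). Qed.
Lemma split_rsh m1 m2 (i : 'I_m2) : split (rshift m1 i) = inr i.
Proof. by have := unsplitK (inr _ i). Qed.

Lemma sum_split_ord (T : nmodType) m1 m2 (f : 'I_(m1+m2) -> T) :
  \sum_(i < m1 + m2) f i = \sum_(i < m1) f (lshift m2 i) + \sum_(i < m2) f (rshift m1 i).
Proof. by rewrite big_split_ord. Qed.

Lemma P_comb x y t : P x -> P y -> 0 <= t <= 1 -> P (t *: x + (1 - t) *: y).
Proof.
move=> [m1 [p1 [w1 [Hp1 Hw1 Hs1 ->]]]] [m2 [p2 [w2 [Hp2 Hw2 Hs2 ->]]]] /andP[t0 t1].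
exists (m1 + m2)%N, (fun i => match split i with inl j => p1 j | inr j => p2 j end),
  (fun i => match split i with inl j => t * w1 j | inr j => (1 - t) * w2 j end).
split.
- by move=> i; case: (split i).
- move=> i; case: (split i) => j; apply: mulr_ge0 => //; by rewrite subr_ge0.
- rewrite sum_split_ord.
  rewrite (eq_bigr (fun i => t * w1 i)); last by move=> i _; rewrite (split_lsh m2 i).
  rewrite [\sum_(i < m2) _](eq_bigr (fun i => (1 - t) * w2 i)); last by move=> i _; rewrite (split_rsh m1 i).
  by rewrite -!mulr_sumr Hs1 Hs2 !mulr1 addrC subrK.
- symmetry; rewrite sum_split_ord.
  rewrite (eq_bigr (fun i => t *: (w1 i *: p1 i))); last by move=> i _ /=; rewrite (split_lsh m2 i) scalerA.
  rewrite [\sum_(i < m2) _](eq_bigr (fun i => (1 - t) *: (w2 i *: p2 i))); last by move=> i _ /=; rewrite (split_rsh m1 i) scalerA.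
  by rewrite -!scaler_sumr.
Qed.

Lemma P_avg (s : seq V) : s != [::] -> (forall x, x \in s -> P x) ->
  P ((size s)%:R^-1 *: \sum_(x <- s) x).
Proof.
elim: s => // a s IH _ H.
have Pa : P a by apply: H; rewrite inE eqxx.
case: s IH H => [|b s] IH H.
  by rewrite big_cons big_nil addr0 /= invr1 scale1r.
have Ps := IH isT (fun x xs => H x (@mem_behead _ (a :: b :: s) x xs)).
move: Ps; set k := size (b :: s) => Ps.
have kR : (k%:R : R) != 0 by rewrite pnatr_eq0.
have k1R : (k%:R + 1 : R) != 0 by rewrite natr1 pnatr_eq0.
have e : (1 - (k%:R + 1)^-1) * (k%:R)^-1 = (k%:R + 1)^-1 :> R by field; rewrite kR k1R.
have -> : (size [:: a, b & s])%:R^-1 *: \sum_(x <- [:: a, b & s]) x =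
  ((k%:R + 1)^-1) *: a + (1 - (k%:R + 1)^-1) *: (k%:R^-1 *: \sum_(x <- b :: s) x).
  by rewrite big_cons scalerDr scalerA e -natr1.
apply: P_comb => //; apply/andP; split; first by rewrite invr_ge0 natr1 ler0n.
have hk : (0 : R) < k%:R + 1 by rewrite natr1 ltr0Sn.
by rewrite invf_le1 // lerDr ler0n.
Qed.

Lemma orbit_finite : exists T : seq V, forall x, Orb x -> x \in T.
Proof.
case: HR => -[_ _ Hspan] _.
have H : forall L : seq V, exists T : seq V, forall l lam, lam \in L -> all (mem Rt) l ->
    wmap l lam \in T.
  elim => [|lam L [T IH]]; first by exists [::].
  have [c Hc] := Hspan lam.
  have Hi : forall l (i : 'I_(size Rt)), all (mem Rt) l -> (index (wmap l Rt`_i) Rt < size Rt)%N.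
    by move=> l i lR; rewrite index_mem wmap_root // mem_nth.
  exists ([seq \sum_(i < size Rt) c i *: Rt`_(f i) | f : {ffun 'I_(size Rt) -> 'I_(size Rt)}] ++ T).
  move=> l lam'; rewrite inE => /orP[/eqP -> lR|lL lR]; last first.
    by rewrite mem_cat IH ?orbT.
  rewrite mem_cat; apply/orP; left.
  apply/mapP; exists [ffun i => Ordinal (Hi l i lR)]; first by rewrite mem_enum.
  rewrite {1}Hc wmap_sum; apply: eq_bigr => i _; rewrite wmapZ ffunE /=.
  by rewrite nth_index // wmap_root // mem_nth.
have [T HT] := H Lam.
by exists T => x [l [lam [lR lamL ->]]]; apply: HT.
Qed.

Lemma comb_eq m (w f : 'I_m -> R) c : (forall i, 0 <= w i) -> \sum_i w i = 1 ->
  (forall i, f i <= c) -> \sum_i w i * f i = c -> forall i, 0 < w i -> f i = c.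
Proof.
move=> w0 w1 fc Hs i wi.
have Hz : \sum_i w i * (c - f i) = 0.
  under eq_bigr do rewrite mulrBr.
  by rewrite sumrB Hs -mulr_suml w1 mul1r subrr.
have H0 : w i * (c - f i) = 0.
  apply: (@psumr_eq0P _ _ predT (fun j => w j * (c - f j)) _ Hz i isT).
  by move=> j _; rewrite mulr_ge0 // subr_ge0.
by move: H0 => /eqP; rewrite mulf_eq0 (gt_eqF wi) /= subr_eq0 => /eqP ->.
Qed.

Lemma dot_comb m (w : 'I_m -> R) (p : 'I_m -> V) u :
  dot u (\sum_i w i *: p i) = \sum_i w i * dot u (p i).
Proof. by rewrite dot_sumr; apply: eq_bigr => i _; rewrite dotZr. Qed.

Lemma pos_weight m (w : 'I_m -> R) : (forall i, 0 <= w i) -> \sum_i w i = 1 ->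
  exists i, 0 < w i.
Proof.
move=> w0 w1; case: (EM (exists i, 0 < w i)) => // H.
have : \sum_i w i = 0.
  apply: big1 => i _; apply/eqP; rewrite eq_le w0 andbT leNgt; apply/negP => h.
  by apply: H; exists i.
by rewrite w1 => /eqP; rewrite oner_eq0.
Qed.

Lemma face_orb (I : finType) (A : {set I}) (u : I -> V) (c : I -> R) x :
  (forall i, i \in A -> forall y, P y -> dot (u i) y <= c i) -> P x ->
  (forall i, i \in A -> dot (u i) x = c i) ->
  exists q, Orb q /\ forall i, i \in A -> dot (u i) q = c i.
Proof.
move=> Hle [m [p [w [Hp Hw Hs Hx]]]] Heq.
have [j wj] := pos_weight Hw Hs.
exists (p j); split => // i iA.
apply: (@comb_eq m w (fun k => dot (u i) (p k)) (c i) Hw Hs) => //; first by move=> k; apply: Hle => //; apply: Orb_P.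
by rewrite -dot_comb -Hx Heq.
Qed.

Lemma vertex_orb v : vertex P v -> Orb v.
Proof.
move=> [a [b [a0 Hle Hf]]].
have [Pv av] := (Hf v).1 erefl.
move: Pv => [m [p [w [Hp Hw Hs Hx]]]].
have [j wj] := pos_weight Hw Hs.
have : dot a (p j) = b.
  apply: (@comb_eq m w (fun k => dot a (p k)) b Hw Hs) => //; first by move=> k; apply: Hle; apply: Orb_P.
  by rewrite -dot_comb -Hx.
move=> e; have := (Hf (p j)).2 (conj (Orb_P (Hp j)) e).
by move=> <-.
Qed.

Lemma vertex_wmap l v : all (mem Rt) l -> vertex P v -> vertex P (wmap l v).
Proof.
move=> lR [a [b [a0 Hle Hf]]].
have nl := rootsl_nz lR.
have rlR : all (mem Rt) (rev l) by rewrite all_rev.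
exists (wmap l a), b; split.
- apply: contraNneq a0 => h; by rewrite -(wmapK a nl) h wmap0.
- by move=> x Px; rewrite dot_wmapC //; apply: Hle; apply: P_wmap.
- move=> x; split.
    move=> ->; have [Pv av] := (Hf v).1 erefl.
    by split; [apply: P_wmap | rewrite dot_wmap].
  move=> [Px]; rewrite dot_wmapC // => e.
  have := (Hf _).2 (conj (P_wmap rlR Px) e) => <-.
  by rewrite wmapKr.
Qed.



Lemma alpha_indep (c d : 'I_n -> R) :
  \sum_k c k *: alpha k = \sum_k d k *: alpha k -> c = d.
Proof.
case: HS => _ Hind _ H; apply/funext => k; apply/eqP; rewrite -subr_eq0; apply/eqP.
apply: (Hind (fun k => c k - d k)).
under eq_bigr do rewrite scalerBl.
by rewrite sumrB H subrr.
Qed.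

Lemma sum_nonneg_eq0 (e g : 'I_n -> R) : (forall j, 0 <= e j) -> (forall j, 0 <= g j) ->
  \sum_j e j * g j = 0 -> forall j, e j * g j = 0.
Proof.
move=> e0 g0 H j.
by apply: (@psumr_eq0P _ _ predT (fun j => e j * g j) _ H j isT) => i _; apply: mulr_ge0.
Qed.

Hypothesis Hnd : nondeg_polytope alpha P.

Lemma nowall v k : vertex P v -> dot v (alpha k) != 0.
Proof.
move=> vv; apply/negP => /eqP vk.
have [l [lam [lR lamL vE]]] := vertex_orb vv.
have nl := rootsl_nz lR.
have rlR : all (mem Rt) (rev l) by rewrite all_rev.
have lamE : lam = wmap (rev l) v by rewrite vE wmapK.
have vlam : vertex P lam by rewrite lamE; apply: vertex_wmap.
set beta := wmap (rev l) (alpha k).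
have bR : beta \in Rt by apply: wmap_root => //; apply: alpha_root.
have lb : dot lam beta = 0 by rewrite lamE dot_wmap ?nzs_rev.
have cl := HL lamL.
case: HS => _ _ /(_ beta bR) [c [bE Hc]].
have Hsum : \sum_j c j * dot lam (alpha j) = 0.
  by rewrite -[RHS]lb bE dot_sumr; apply: eq_bigr => j _; rewrite dotZr.
have g0 : forall j, 0 <= dot lam (alpha j) by move=> j; apply: cl; rewrite inE.
have Hz : forall j, c j * dot lam (alpha j) = 0.
  case: Hc => Hc.
    by apply: sum_nonneg_eq0 => // j; apply: natr_ge0.
  move=> j; apply/eqP; rewrite -oppr_eq0 -mulNr; apply/eqP; move: j.
  apply: sum_nonneg_eq0 => // [j|]; first by apply: natr_ge0.
  by under eq_bigr do rewrite mulNr; rewrite sumrN Hsum oppr0.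
have [j cj] : exists j, c j != 0.
  case: (EM (exists j, c j != 0)) => // H; exfalso.
  have : beta = 0.
    rewrite bE big1 // => j _; case: (EM (c j = 0)) => [->|h]; first by rewrite scale0r.
    by exfalso; apply: H; exists j; apply/eqP.
  by apply/eqP; apply: root_nz.
apply: (Hnd vlam); split => //; exists j.
by have := Hz j => /eqP; rewrite mulf_eq0 (negbTE cj) => /eqP.
Qed.

Lemma alpha_obtuse j k : j != k -> dot (alpha j) (alpha k) <= 0.
Proof.
move=> jk; rewrite leNgt; apply/negP => pos.
have ak := alpha_nz k.
have dk : 0 < dot (alpha k) (alpha k) by apply: dot_gt0.
set t := 2 * dot (alpha j) (alpha k) / dot (alpha k) (alpha k).
have t0 : 0 < t by rewrite /t mulr_gt0 ?invr_gt0 // mulr_gt0.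
have bR : refl (alpha k) (alpha j) \in Rt.
  by case: HR => _ [Hr _ _]; apply: Hr; apply: alpha_root.
case: HS => _ _ /(_ _ bR) [c [bE Hc]].
pose d i : R := (i == j)%:R - t * (i == k)%:R.
have : c = d.
  apply: alpha_indep; rewrite -bE /refl -/t.
  rewrite (eq_bigr (fun i => (i == j)%:R *: alpha i - t *: ((i == k)%:R *: alpha i))); last first.
    by move=> i _; rewrite /d scalerBl scalerA.
  rewrite sumrB -!scaler_sumr.
  rewrite (bigD1 j) //= big1 => [|i /negbTE ->]; last by rewrite scale0r.
  rewrite (bigD1 k) //= [X in t *: (_ + X)]big1 => [|i /negbTE ->]; last by rewrite scale0r.
  by rewrite !eqxx !scale1r !addr0.
move=> cd; case: Hc => Hc.
  have := natr_ge0 (Hc k); rewrite cd /d eqxx eq_sym (negbTE jk) mulr1 sub0r oppr_ge0.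
  by rewrite leNgt t0.
have := natr_ge0 (Hc j); rewrite cd /d eqxx (negbTE jk) mulr0 subr0 oppr_ge0.
by rewrite leNgt ltr01.
Qed.


Lemma list_max (s : seq V) (f : V -> R) : s != [::] ->
  exists p, p \in s /\ forall q, q \in s -> f q <= f p.
Proof.
elim: s => // a s IH _.
case: s IH => [|b s] IH.
  by exists a; split => [|q]; rewrite ?inE // => /eqP ->.
have [p [ps Hp]] := IH isT.
case: (lerP (f a) (f p)) => h.
  exists p; split; first by rewrite inE ps orbT.
  by move=> q; rewrite inE => /orP[/eqP ->|/Hp].
exists a; split; first by rewrite inE eqxx.
move=> q; rewrite inE => /orP[/eqP ->//|/Hp h2].
by apply: le_trans h2 (ltW h).
Qed.

Lemma small_eps (s : seq V) (g : V -> R) : (forall q, q \in s -> 0 < g q) ->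
  exists e, [/\ 0 < e, e <= 1 & forall q, q \in s -> e <= g q].
Proof.
elim: s => [|a s IH] H; first by exists 1; split => //; rewrite ltr01.
have [e [e0 e1 He]] := IH (fun q qs => H q (@mem_behead _ (a :: s) q qs)).
have ga := H a (mem_head _ _).
exists (Num.min e (g a)); split.
- by rewrite lt_min e0 ga.
- by rewrite ge_min e1.
- move=> q; rewrite inE => /orP[/eqP ->|qs]; first by rewrite ge_min lexx orbT.
  by rewrite ge_min He.
Qed.

Lemma dot_le_sq (p q : V) : dot q q <= dot p p -> dot p q <= dot p p /\ (dot p q = dot p p -> q = p).
Proof.
move=> h.
have E : dot (p - q) (p - q) = dot p p - 2 * dot p q + dot q q.
  by rewrite !dotBl !dotBr (dotC q p); ring.
have := dot_ge0 (p - q); rewrite E => h2; split; first by lra.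
move=> e; apply/eqP; rewrite eq_sym -subr_eq0 -dot_eq0 eq_le dot_ge0 andbT E e.
lra.
Qed.

Lemma vertex_exists (e0 : V) u c : e0 != 0 ->
  (forall y, P y -> dot u y <= c) -> (exists x, P x /\ dot u x = c) ->
  exists v, vertex P v /\ dot u v = c.
Proof.
move=> e00 Hle [x0 [Px0 ux0]].
have [T HT] := orbit_finite.
set OF := [seq q <- T | `[< Orb q /\ dot u q = c >]].
set N := [seq q <- T | `[< Orb q /\ dot u q != c >]].
have OFP q : q \in OF <-> Orb q /\ dot u q = c.
  rewrite mem_filter; split; first by case/andP => /asboolP.
  by move=> h; rewrite (HT _ h.1) andbT; apply/asboolP.
have NP q : q \in N <-> Orb q /\ dot u q != c.
  rewrite mem_filter; split; first by case/andP => /asboolP.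
  by move=> h; rewrite (HT _ h.1) andbT; apply/asboolP.
have OFne : OF != [::].
  have [q [Oq uq]] := @face_orb 'I_1 setT (fun _ => u) (fun _ => c) x0
     (fun _ _ => Hle) Px0 (fun _ _ => ux0).
  have : q \in OF by apply/OFP; split => //; apply: (uq ord0); rewrite inE.
  by move=> h; apply/negP => /eqP e; rewrite e in h.
have [p [pOF Hp]] := list_max (fun q => dot q q) OFne.
have [Op up] := (OFP p).1 pOF.
pose g q := (c - dot u q) / (1 + `|dot p q - dot p p|).
have gpos q : q \in N -> 0 < g q.
  move=> /NP [Oq uq]; rewrite /g divr_gt0 //; last by rewrite ltr_pwDl // normr_ge0.
  by rewrite subr_gt0 lt_neqAle uq Hle //; apply: Orb_P.
have [eps [eps0 eps1 Heps]] := small_eps gpos.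
have claim : forall e', 0 < e' -> e' <= eps -> forall y, P y ->
    dot (u + e' *: p) y <= c + e' * dot p p /\
    (dot (u + e' *: p) y = c + e' * dot p p -> y = p).
  move=> e' e'0 e'e.
  have Hq : forall q, Orb q -> dot (u + e' *: p) q <= c + e' * dot p p /\
       (dot (u + e' *: p) q = c + e' * dot p p -> q = p).
    move=> q Oq; rewrite dotDl dotZl.
    case: (EM (dot u q = c)) => uq.
      have [h1 h2] := dot_le_sq (Hp q ((OFP q).2 (conj Oq uq))).
      rewrite uq; split; first by rewrite lerD2l ler_pM2l.
      move=> /addrI /(mulfI (lt0r_neq0 e'0)).
      exact: h2.
    have qN : q \in N by apply/NP; split => //; apply/eqP.
    have hg := Heps q qN.
    have uqc : dot u q < c.
      by rewrite lt_neqAle Hle ?andbT; [apply/eqP | apply: Orb_P].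
    have key : e' * (dot p q - dot p p) < c - dot u q.
      have h1 : e' * (dot p q - dot p p) <= e' * `|dot p q - dot p p|.
        by rewrite ler_pM2l // ler_norm.
      have h2 : e' * (1 + `|dot p q - dot p p|) <= c - dot u q.
        rewrite -ler_pdivlMr; last by rewrite ltr_pwDl // normr_ge0.
        exact: le_trans e'e hg.
      lra.
    split; first by lra.
    by move=> h; exfalso; lra.
  move=> y [m [q [w [Hqo Hw Hs ->]]]].
  rewrite dot_comb; split.
    rewrite -[X in _ <= X]mul1r -Hs mulr_suml; apply: ler_sum => i _.
    by apply: ler_wpM2l => //; apply: (Hq _ (Hqo i)).1.
  move=> he.
  have hi : forall i, 0 < w i -> q i = p.
    move=> i wi; apply: (Hq _ (Hqo i)).2.
    apply: (@comb_eq m w (fun k => dot (u + e' *: p) (q k)) _ Hw Hs) => //.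
    by move=> k; apply: (Hq _ (Hqo k)).1.
  rewrite -[RHS]scale1r -Hs scaler_suml; apply: eq_bigr => i _.
  have := Hw i; rewrite le_eqVlt => /orP[/eqP <-|wi]; first by rewrite !scale0r.
  by rewrite hi.
have Pp : P p by apply: Orb_P.
have mkv : forall e', 0 < e' -> e' <= eps -> u + e' *: p != 0 -> vertex P p.
  move=> e' e'0 e'e a0; exists (u + e' *: p), (c + e' * dot p p); split => //.
    by move=> y Py; apply: (claim e' e'0 e'e y Py).1.
  move=> y; split; first by move=> ->; split => //; rewrite dotDl dotZl up.
  by case=> Py; apply: (claim e' e'0 e'e y Py).2.
exists p; split => //.
case: (EM (u + eps *: p != 0)) => [h|h]; first by apply: (mkv eps).
have h' : u + eps *: p = 0 by move: h; case: eqP => // _ /(_ isT).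
have e2 : 0 < eps / 2 by rewrite divr_gt0.
have e2le : eps / 2 <= eps by lra.
case: (EM (u + (eps / 2) *: p != 0)) => [h2|h2]; first by apply: (mkv (eps / 2)).
have h2' : u + (eps / 2) *: p = 0 by move: h2; case: eqP => // _ /(_ isT).
have p0 : p = 0.
  have E : (eps - eps / 2) *: p = (u + eps *: p) - (u + (eps / 2) *: p).
    by rewrite scalerBl opprD addrACA subrr add0r.
  move: E; rewrite h' h2' subrr => /eqP; rewrite scaler_eq0 => /orP[|/eqP //].
  by rewrite subr_eq0 => /eqP hh; exfalso; lra.
have u0 : u = 0 by rewrite -h' p0 scaler0 addr0.
have c0 : c = 0 by rewrite -up p0 dot0r.
have Py0 : forall y, P y -> y = p.
  move=> y Py; apply: (claim eps eps0 (lexx _) y Py).2.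
  by rewrite u0 p0 scaler0 addr0 dot0l dot0r mulr0 c0 addr0.
exists e0, 0; split => //.
  by move=> y /Py0 ->; rewrite p0 dot0r.
move=> y; split; first by move=> ->; split => //; rewrite p0 dot0r.
by case=> /Py0.
Qed.


Lemma dot_refl_exp u a x :
  dot u (refl a x) = dot u x - 2 * dot x a / dot a a * dot u a.
Proof. by rewrite /refl dotBr dotZr. Qed.

Lemma vertexP v : vertex P v -> P v.
Proof. by move=> [a [b [_ _ Hf]]]; exact: ((Hf v).1 erefl).1. Qed.

Section FacetK.
Variables (K : {set 'I_n}) (F : V -> Prop) (u : V) (c : R).
Hypothesis u0 : u != 0.
Hypothesis Hle : forall x, P x -> dot u x <= c.
Hypothesis HF : forall x, F x <-> P x /\ dot u x = c.
Hypothesis Fne : exists x, F x.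
Hypothesis Hb : exists b, barycenter P F b /\ cone alpha K b.

Lemma facet_pos k : k \in K -> 0 <= dot u (alpha k).
Proof.
move=> kK; rewrite leNgt; apply/negP => neg.
have ak := alpha_nz k.
have dk : 0 < dot (alpha k) (alpha k) by apply: dot_gt0.
have Fneg : forall x, F x -> dot x (alpha k) <= 0.
  move=> x /HF [Px ux].
  have := Hle (P_refl (alpha_root k) Px); rewrite dot_refl_exp ux => h.
  have h2 : 0 <= 2 * dot x (alpha k) / dot (alpha k) (alpha k) * dot u (alpha k) by lra.
  rewrite leNgt; apply/negP => xp.
  have : 2 * dot x (alpha k) / dot (alpha k) (alpha k) * dot u (alpha k) < 0.
    by rewrite pmulr_rlt0 // divr_gt0 // mulr_gt0.
  by rewrite ltNge h2.
have [x0 Fx0] := Fne.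
have [v [vv uv]] : exists v, vertex P v /\ dot u v = c.
  apply: (vertex_exists u0) => //; exists x0; exact/HF.
have Fv : F v by apply/HF; split => //; apply: vertexP.
have [b [[s [us Hs bE] ] cb]] := Hb.
have vs : v \in s by apply/Hs.
have sneg : forall x, x \in s -> dot x (alpha k) < 0.
  move=> x /Hs [xv Fx]; rewrite lt_neqAle Fneg // andbT; exact: nowall.
have : dot b (alpha k) < 0.
  rewrite bE dotZl dot_suml pmulr_rlt0; last first.
    by rewrite invr_gt0 ltr0n; case: (s) vs.
  rewrite (bigD1_seq v) //=.
  have : \sum_(i <- s | i != v) dot i (alpha k) <= 0.
    by rewrite big_seq_cond; apply: sumr_le0 => i /andP[? _]; apply: ltW; apply: sneg.
  have := sneg v vs; lra.
by rewrite ltNge cb.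
Qed.

Lemma facet_wall k : k \in K -> (exists z, F z /\ dot z (alpha k) = 0) -> dot u (alpha k) = 0.
Proof.
move=> kK [z [Fz zk]]; apply/eqP; rewrite eq_le facet_pos // andbT leNgt; apply/negP => pos.
have ak := alpha_nz k.
have dk : 0 < dot (alpha k) (alpha k) by apply: dot_gt0.
have Hle2 : forall x, P x -> dot (u + refl (alpha k) u) x <= 2 * c.
  move=> x Px; rewrite dotDl dot_reflC.
  have := Hle Px; have := Hle (P_refl (alpha_root k) Px); lra.
have [Pz uz] := (HF z).1 Fz.
have [v [vv uv]] : exists v, vertex P v /\ dot (u + refl (alpha k) u) v = 2 * c.
  apply: (vertex_exists u0) => //; exists z; split => //.
  rewrite dotDl dot_reflC.
  have -> : refl (alpha k) z = z by apply/eqP; rewrite refl_fix // zk.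
  by rewrite uz; ring.
have Pv := vertexP vv.
move: uv; rewrite dotDl dot_reflC => uv.
have h1 := Hle Pv; have h2 := Hle (P_refl (alpha_root k) Pv).
have e1 : dot u (refl (alpha k) v) = c by lra.
move: e1; rewrite dot_refl_exp.
have e2 : dot u v = c by lra.
rewrite e2 => e3.
have : 2 * dot v (alpha k) / dot (alpha k) (alpha k) * dot u (alpha k) = 0 by lra.
move/eqP; rewrite !mulf_eq0 (gt_eqF pos) invr_eq0 (gt_eqF dk) /= !orbF pnatr_eq0 /= => /eqP vk.
by have := nowall k vv; rewrite vk eqxx.
Qed.

End FacetK.

Lemma rho_exists : exists rho : V, forall k, dot rho (alpha k) = 1.
Proof.
pose M : 'M[R]_n := \matrix_(k, j) alpha k 0 j.
have rowM k : row k M = alpha k by apply/rowP => j; rewrite !mxE.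
have Hind : forall c : 'rV[R]_n, c *m M = 0 -> c = 0.
  move=> c cM; case: HS => _ Hi _.
  have E : c *m M = \sum_k c 0 k *: alpha k.
    apply/rowP => j; rewrite !mxE summxE; apply: eq_bigr => k _; rewrite !mxE.
    done.
  apply/rowP => k; rewrite mxE; apply: (Hi (fun k => c 0 k)).
  by rewrite -E cM.
have kz : kermx M = 0.
  apply/row_matrixP => i; rewrite row0; apply: Hind.
  by rewrite -row_mul mulmx_ker row0.
have Mu : M \in unitmx by rewrite -row_free_unit -kermx_eq0 kz.
exists (invmx M *m const_mx 1)^T => k.
rewrite dotC /dot trmxK -rowM -row_mul mulmxA mulmxV // mul1mx !mxE.
done.
Qed.

Lemma sum_seq_const (s : seq V) (a : R) : \sum_(q <- s) a = (size s)%:R * a.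
Proof.
elim: s => [|x s IH]; first by rewrite big_nil mul0r.
by rewrite big_cons IH /= -natr1 mulrDl mul1r addrC.
Qed.

Lemma addr4 (a b c d : V) : a + b + (c + d) = c + a + (d + b).
Proof. by rewrite addrACA (addrC a c) (addrC b d). Qed.

Lemma mul_nonpos (x y : R) : x <= 0 -> 0 <= y -> x * y <= 0.
Proof. move=> hx hy; have := mulr_ge0 (ltac:(rewrite oppr_ge0; exact hx) : 0 <= - x) hy; rewrite mulNr oppr_ge0. done. Qed.

Section MG.
Variables (I : finType) (A : {set I}) (u : I -> V) (c : I -> R) (K B : {set 'I_n}).
Hypothesis HleA : forall i, i \in A -> forall y, P y -> dot (u i) y <= c i.
Hypothesis posA : forall i k, i \in A -> k \in K -> 0 <= dot (u i) (alpha k).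
Hypothesis wallA : forall i k, i \in A -> k \in B -> dot (u i) (alpha k) = 0.
Hypothesis BK : B \subset K.
Hypothesis Gne : exists x, P x /\ forall i, i \in A -> dot (u i) x = c i.

Definition Gp q := Orb q /\ forall i, i \in A -> dot (u i) q = c i.

Lemma step2 : exists p, Gp p /\ forall k, k \in K -> 0 <= dot p (alpha k).
Proof.
have [T HT] := orbit_finite.
have [rho Hrho] := rho_exists.
set OG := [seq q <- T | `[< Gp q >]].
have OGP q : q \in OG <-> Gp q.
  rewrite mem_filter; split; first by case/andP => /asboolP.
  by move=> h; rewrite (HT _ h.1) andbT; apply/asboolP.
have [x [Px Hx]] := Gne.
have [q0 Gq0] := face_orb HleA Px Hx.
have OGne : OG != [::].
  have : q0 \in OG by apply/OGP.
  by move=> h; apply/negP => /eqP e; rewrite e in h.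
have [p [pOG Hp]] := list_max (fun q => dot rho q) OGne.
exists p; split; first exact/OGP.
move=> k kK; rewrite leNgt; apply/negP => neg.
have [Op Gpp] := (OGP p).1 pOG.
have ak := alpha_nz k.
have dk : 0 < dot (alpha k) (alpha k) by apply: dot_gt0.
have t0 : 2 * dot p (alpha k) / dot (alpha k) (alpha k) < 0.
  by rewrite pmulr_llt0 ?invr_gt0 // pmulr_rlt0.
have Gq : Gp (refl (alpha k) p).
  split; first by apply: Orb_refl => //; apply: alpha_root.
  move=> i iA; apply/eqP; rewrite eq_le HleA //=; last first.
    by apply: P_refl; [apply: alpha_root | apply: Orb_P].
  rewrite dot_refl_exp Gpp //.
  have := mul_nonpos (ltW t0) (posA iA kK); lra.
have := Hp _ ((OGP _).2 Gq); rewrite /= dot_refl_exp Hrho mulr1.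
lra.
Qed.

Lemma step3 p : Gp p -> exists x (t : 'I_n -> R),
  [/\ P x, (forall i, i \in A -> dot (u i) x = c i),
      (forall k, k \in B -> dot x (alpha k) = 0),
      (forall k, k \notin B -> t k = 0) & x = p + \sum_k t k *: alpha k].
Proof.
move=> [Op Gpp].
have [T HT] := orbit_finite.
set Bl := [seq alpha k | k in B].
have BlP a : a \in Bl -> exists2 k, k \in B & a = alpha k.
  by case/imageP => k kB ->; exists k.
have BlR l : all (mem Bl) l -> all (mem Rt) l.
  move=> /allP H; apply/allP => a /H /BlP [k _ ->]; apply: alpha_root.
pose reach q := exists l, all (mem Bl) l /\ q = wmap l p.
have reachO q : reach q -> Orb q.
  by move=> [l [lB ->]]; apply: Orb_wmap => //; apply: BlR.
have reachG q : reach q -> forall i, i \in A -> dot (u i) q = c i.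
  move=> [l [lB ->]] i iA; elim: l lB => [|a l IH]; first by rewrite /= Gpp.
  move=> /andP[aB lB]; rewrite wmap_cons dot_refl_exp IH //.
  by have [k kB ->] := BlP a aB; rewrite wallA // mulr0 subr0.
have reachT q : reach q -> exists t : 'I_n -> R,
    (forall k, k \notin B -> t k = 0) /\ q = p + \sum_k t k *: alpha k.
  move=> [l [lB ->]]; elim: l lB => [|a l IH].
    move=> _; exists (fun _ => 0); split => //.
    by rewrite big1 ?addr0 // => k _; rewrite scale0r.
  move=> /andP[aB lB]; have [t [tB E]] := IH lB.
  have [k0 k0B ->] := BlP a aB.
  set s := 2 * dot (wmap l p) (alpha k0) / dot (alpha k0) (alpha k0).
  exists (fun k => t k - (k == k0)%:R * s); split.
    move=> k kB; rewrite tB //.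
    have -> : (k == k0) = false by apply/negbTE; apply: contraNneq kB => ->.
    by rewrite mul0r subr0.
  rewrite wmap_cons {1}/refl -/s {1}E.
  have Hd : \sum_k ((k == k0)%:R * s) *: alpha k = s *: alpha k0.
    rewrite (bigD1 k0) //= big1 => [|k /negbTE ->]; last by rewrite mul0r scale0r.
    by rewrite eqxx mul1r addr0.
  have Hs : \sum_k (t k - (k == k0)%:R * s) *: alpha k =
      \sum_k t k *: alpha k - s *: alpha k0.
    rewrite (eq_bigr (fun k => t k *: alpha k - ((k == k0)%:R * s) *: alpha k)); last first.
      by move=> k _; rewrite scalerBl.
    by rewrite sumrB Hd.
  by rewrite Hs addrA.
set O := [seq q <- undup T | `[< reach q >]].
have OP q : q \in O <-> reach q.
  rewrite mem_filter mem_undup; split; first by case/andP => /asboolP.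
  by move=> h; rewrite (HT _ (reachO _ h)) andbT; apply/asboolP.
have Ou : uniq O by rewrite filter_uniq // undup_uniq.
have pO : p \in O by apply/OP; exists [::].
have One : O != [::] by move: pO; case: (O).
have Operm k : k \in B -> perm_eq (map (refl (alpha k)) O) O.
  move=> kB; apply: uniq_perm => //.
    rewrite map_inj_uniq // => y z /(congr1 (refl (alpha k))).
    by rewrite !reflK // alpha_nz.
  have Hu : uniq (map (refl (alpha k)) O).
    rewrite map_inj_uniq // => y z /(congr1 (refl (alpha k))).
    by rewrite !reflK // alpha_nz.
  apply: (uniq_min_size Hu _ _).2; last by rewrite size_map.
  move=> y /mapP [q /OP [l [lB ->]] ->]; apply/OP; exists (alpha k :: l); split => //.
  by rewrite /= lB andbT; apply/imageP; exists k.
have SP k : k \in B -> dot (\sum_(q <- O) q) (alpha k) = 0.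
  move=> kB; apply/eqP; rewrite -refl_fix ?alpha_nz // refl_sum.
  rewrite -(big_map (refl (alpha k)) predT id).
  by rewrite (perm_big _ (Operm k kB)).
have [t [tB E]] : exists t : 'I_n -> R, (forall k, k \notin B -> t k = 0) /\
    \sum_(q <- O) q = (size O)%:R *: p + \sum_k t k *: alpha k.
  have : forall q, q \in O -> reach q by move=> q /OP.
  elim: (O) => [|q s IH] H.
    exists (fun _ => 0); split => //.
    by rewrite big_nil scale0r big1 ?addr0 // => k _; rewrite scale0r.
  have [t1 [t1B E1]] := IH (fun y ys => H y (@mem_behead _ (q :: s) y ys)).
  have [t2 [t2B E2]] := reachT q (H q (mem_head _ _)).
  exists (fun k => t1 k + t2 k); split.
    by move=> k kB; rewrite t1B // t2B // addr0.
  have Hs : \sum_k (t1 k + t2 k) *: alpha k = \sum_k t1 k *: alpha k + \sum_k t2 k *: alpha k.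
    by rewrite -big_split; apply: eq_bigr => k _; rewrite scalerDl.
  rewrite big_cons E1 {1}E2 /= -natr1 scalerDl scale1r Hs.
  by rewrite addr4.
have sO : (size O)%:R != 0 :> R by rewrite pnatr_eq0; case: (O) One.
exists ((size O)%:R^-1 *: \sum_(q <- O) q), (fun k => (size O)%:R^-1 * t k); split.
- apply: P_avg => // q /OP /reachO; apply: Orb_P.
- move=> i iA; rewrite dotZr dot_sumr.
  rewrite (eq_big_seq (fun _ => c i)); last by move=> q /OP /reachG ->.
  by rewrite sum_seq_const mulrA mulVf // mul1r.
- by move=> k kB; rewrite dotZl SP // mulr0.
- by move=> k kB; rewrite tB // mulr0.
- rewrite E scalerDr scalerA mulVf // scale1r scaler_sumr; congr (_ + _).
  by apply: eq_bigr => k _; rewrite scalerA.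
Qed.

Lemma MG : exists x, [/\ P x, (forall i, i \in A -> dot (u i) x = c i),
  (forall k, k \in K -> 0 <= dot x (alpha k)) & (forall k, k \in B -> dot x (alpha k) = 0)].
Proof.
have [p [Gpp pK]] := step2.
have [x [t [Px Gx xB tB xE]]] := step3 Gpp.
have obt j k : j != k -> dot (alpha j) (alpha k) <= 0 by apply: alpha_obtuse.
have tneg : forall k, t k <= 0.
  pose tp k := if 0 <= t k then t k else 0.
  pose tn k := if 0 <= t k then 0 else - t k.
  have ttp k : t k = tp k - tn k.
    by rewrite /tp /tn; case: ifP => _; rewrite ?subr0 ?sub0r ?opprK.
  have tn0 k : 0 <= tn k.
    by rewrite /tn; case: ifP => // /negbT; rewrite -ltNge oppr_ge0 => /ltW.
  set y := \sum_k tp k *: alpha k.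
  set y' := \sum_k tn k *: alpha k.
  have yE : y = (x - p) + y'.
    rewrite xE (addrC p) addrK /y /y' -big_split; apply: eq_bigr => k _ /=.
    by rewrite ttp scalerBl subrK.
  have yy : dot y y <= 0.
    rewrite {1}/y dot_suml; apply: sumr_le0 => k _; rewrite dotZl.
    case: (boolP (0 <= t k)) => tk; last by rewrite /tp (negbTE tk) mul0r.
    rewrite /tp tk.
    case: (EM (t k = 0)) => [->|tk0]; first by rewrite mul0r.
    have kB : k \in B by apply: contraT => h; exfalso; apply: tk0; apply: tB.
    have kK : k \in K by apply: (subsetP BK).
    rewrite mulrC; apply: mul_nonpos => //.
    rewrite yE dotC dotDl dotBl xB // sub0r (dotC y') /y' dot_sumr.
    have : \sum_j dot (alpha k) (tn j *: alpha j) <= 0.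
      apply: sumr_le0 => j _; rewrite dotZr.
      case: (eqVneq j k) => [->|jk]; first by rewrite /tn tk mul0r.
      by rewrite mulrC; apply: mul_nonpos => //; apply: obt; rewrite eq_sym.
    have := pK k kK; lra.
  have y0 : y = 0 by apply/eqP; rewrite -dot_eq0 eq_le yy dot_ge0.
  have tp0 : tp = fun _ => 0.
    apply: alpha_indep; rewrite -/y y0; symmetry; apply: big1 => k _; apply: scale0r.
  move=> k; have := congr1 (fun f => f k) tp0; rewrite /tp /=.
  by case: ifP => [_ ->|/negbT]; rewrite // -ltNge => /ltW.
exists x; split => // k kK.
case: (boolP (k \in B)) => kB; first by rewrite xB.
rewrite xE dotDl dot_suml.
have : 0 <= \sum_j dot (t j *: alpha j) (alpha k).
  apply: sumr_ge0 => j _; rewrite dotZl.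
  case: (eqVneq j k) => [->|jk]; first by rewrite tB // mul0r.
  by apply: mulr_le0 => //; apply: obt.
have := pK k kK; lra.
Qed.

End MG.

End Geo.

Unset Implicit Arguments. Set Strict Implicit.

Lemma gen_ideal_mono (T : comRingType) (G1 G2 : T -> Prop) p :
  (forall g, G1 g -> gen_ideal G2 g) -> gen_ideal G1 p -> gen_ideal G2 p.
Proof.
move=> H [s [Hs ->]]; elim: s Hs => [|a s IH] Hs.
  by exists [::]; split => //; rewrite !big_nil.
have [s1 [Hs1 E1]] := IH (fun c cs => Hs c (@mem_behead _ (a :: s) c cs)).
have [s2 [Hs2 E2]] := H _ (Hs a (mem_head _ _)).
exists ([seq (a.1 * d.1, d.2) | d <- s2] ++ s1); split.
  move=> d; rewrite mem_cat => /orP[/mapP [e es ->] /=|]; first by apply: Hs2.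
  exact: Hs1.
rewrite big_cat big_cons E1 E2 big_map mulr_sumr /=; congr (_ + _).
by apply: eq_bigr => d _; rewrite mulrA.
Qed.

Lemma gen_ideal_mul (T : comRingType) (G : T -> Prop) a g : G g -> gen_ideal G (a * g).
Proof. by move=> Gg; exists [:: (a, g)]; split => [c|]; rewrite ?inE ?big_seq1 // => /eqP ->. Qed.

Theorem lemma2p10
  (R : realType) (n : nat) (Rt : seq 'rV[R]_n) (alpha : 'I_n -> 'rV[R]_n)
  (Lam : seq 'rV[R]_n) (K : {set 'I_n}) (F : fieldType)
  (m q : nat) (fac : 'I_m -> 'rV[R]_n -> Prop) (kap : 'I_q -> 'I_n) :
  reduced_root_system Rt ->
  simple_system Rt alpha ->
  (forall lam, lam \in Lam -> cone alpha setT lam) ->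
  let P := conv (Worbit Rt Lam) in
  full_dimensional P ->
  nondeg_polytope alpha P ->
  (* fac enumerates \mathcal F_K without repetition *)
  (forall i, facets_K alpha P K (fac i)) ->
  (forall G, facets_K alpha P K G -> exists i, forall x, G x <-> fac i x) ->
  (forall i j, (forall x, fac i x <-> fac j x) -> i = j) ->
  (* kap enumerates K without repetition *)
  (forall j, kap j \in K) ->
  (forall k, k \in K -> exists j, kap j = k) ->
  injective kap ->
  let X (i : 'I_m) : {mpoly F[m + q]} := 'X_(lshift q i) in
  let Y (j : 'I_q) : {mpoly F[m + q]} := 'X_(rshift m j) in
  (* generators of I_K: monomials of facets of P /\ C_K with empty intersection *)
  let SRgen (p : {mpoly F[m + q]}) :=
    exists (A : {set 'I_m}) (B : {set 'I_q}),
      p = (\prod_(i in A) X i) * (\prod_(j in B) Y j) /\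
      ~ (exists x, (forall i, i \in A -> fac i x /\ cone alpha K x) /\
                   (forall j, j \in B -> wall alpha (kap j) x /\ P x)) in
  (* type (i) *)
  let gen1 (p : {mpoly F[m + q]}) :=
    exists A : {set 'I_m},
      p = \prod_(i in A) X i /\ ~ (exists x, forall i, i \in A -> fac i x) in
  (* type (ii) *)
  let gen2 (p : {mpoly F[m + q]}) :=
    exists (i : 'I_m) (j : 'I_q),
      p = X i * Y j /\ ~ (exists x, fac i x /\ wall alpha (kap j) x) in
  forall p : {mpoly F[m + q]},
    gen_ideal SRgen p <-> gen_ideal (fun g => gen1 g \/ gen2 g) p.
Proof.
move=> HR HS HL P Hfull Hnd Hfac _ _ Hkap _ _ X Y SRgen gen1 gen2 p.
have Hf : forall i, exists uc : 'rV[R]_n * R, [/\ uc.1 != 0,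
    forall x, P x -> dot uc.1 x <= uc.2 & forall x, fac i x <-> P x /\ dot uc.1 x = uc.2].
  move=> i; have [[[a [b [a0 Hle HF]]] _] _] := Hfac i.
  by exists (a, b); split.
case: (choice Hf) => uc Huc.
pose u i := (uc i).1; pose c i := (uc i).2.
have u0 i : u i != 0 by case: (Huc i).
have Hle i : forall x, P x -> dot (u i) x <= c i by case: (Huc i).
have HF i : forall x, fac i x <-> P x /\ dot (u i) x = c i by case: (Huc i).
have Fne i : exists x, fac i x.
  by have [[_ [x0 [_ [Fx0 _ _]]]] _] := Hfac i; exists x0.
have Hb i : exists b, barycenter P (fac i) b /\ cone alpha K b by case: (Hfac i).
have fpos i k : k \in K -> 0 <= dot (u i) (alpha k).
  exact: (facet_pos HR HS HL Hnd (u0 i) (Hle i) (HF i) (Fne i) (Hb i)).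
have fwall i k : k \in K -> (exists z, fac i z /\ dot z (alpha k) = 0) -> dot (u i) (alpha k) = 0.
  exact: (facet_wall HR HS HL Hnd (u0 i) (Hle i) (HF i) (Fne i) (Hb i)).
have [x0 [_ [Px0 _ _]]] := Hfull.
split; apply: gen_ideal_mono => g.
- move=> [A [B [-> Hno]]].
  case: (EM (exists i j, [/\ i \in A, j \in B & ~ exists x, fac i x /\ wall alpha (kap j) x])).
    move=> [i [j [iA jB Hij]]].
    rewrite (bigD1 i) // (bigD1 j) //=.
    have -> : X i * \prod_(i0 in A | i0 != i) X i0 * (Y j * \prod_(j0 in B | j0 != j) Y j0)
        = (\prod_(i0 in A | i0 != i) X i0 * \prod_(j0 in B | j0 != j) Y j0) * (X i * Y j).
      by rewrite mulrACA mulrC.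
    by apply: gen_ideal_mul; right; exists i, j.
  move=> Hnij.
  case: (EM (exists x, forall i, i \in A -> fac i x)) => Hx; last first.
    rewrite mulrC; apply: gen_ideal_mul; left; exists A; split => //.
  exfalso; apply: Hno.
  have Gne : exists x, P x /\ forall i, i \in A -> dot (u i) x = c i.
    case: (EM (exists i, i \in A)) => [[i0 i0A]|nA].
      have [x xA] := Hx; exists x; split; first by exact: ((HF i0 x).1 (xA i0 i0A)).1.
      by move=> i iA; exact: ((HF i x).1 (xA i iA)).2.
    by exists x0; split => // i iA; exfalso; apply: nA; exists i.
  have BK : kap @: B \subset K by apply/subsetP => k /imsetP [j _ ->].
  have wallA : forall i k, i \in A -> k \in kap @: B -> dot (u i) (alpha k) = 0.
    move=> i k iA /imsetP [j jB ->]; apply: fwall => //.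
    case: (EM (exists z, fac i z /\ dot z (alpha (kap j)) = 0)) => // nz.
    by exfalso; apply: Hnij; exists i, j; split.
  have [x [Px Gx xK xB]] := MG HR HS (fun i _ => Hle i) (fun i k _ => fpos i k) wallA BK Gne.
  exists x; split.
    move=> i iA; split => //; apply/HF; split => //; exact: Gx.
  move=> j jB; split => //; apply: xB; apply/imsetP; exists j.
  done. done.
- move=> [[A [-> Hno]] | [i [j [-> Hno]]]].
    rewrite -[\prod_(i in A) X i]mul1r; apply: gen_ideal_mul; exists A, set0; split.
      by rewrite big_set0 mulr1.
    move=> [x [Hx _]]; apply: Hno; exists x => i iA; exact: (Hx i iA).1.
  rewrite -[X i * Y j]mul1r; apply: gen_ideal_mul; exists [set i], [set j]; split.
    by rewrite !big_set1.
  move=> [x [Hx Hy]]; apply: Hno; exists x; split; [exact: (Hx i (set11 i)).1 | exact: (Hy j (set11 j)).1].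
Qed.
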